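(* Let $\mathcal H$ be a Hilbert space with $\dim\mathcal H<\infty$ and $T:\mathcal B_*(\mathcal H)\to\mathcal B_*(\mathcal H)$ a channel. Then $$\|T-\mathrm{id}\|\le 4\sup_{\psi\in\mathcal H,\ \|\psi\|=1}\sqrt{1-\langle\psi|T(|\psi\rangle\langle\psi|)|\psi\rangle}.$$
   Context: For a Hilbert space $\mathcal H$, $\mathcal B_*(\mathcal H)$ denotes the trace-class operators on $\mathcal H$ with the trace norm $\|A\|_1=\operatorname{tr}\sqrt{A^*A}$. A channel is a completely positive trace-preserving linear map (Schrödinger picture). For a linear map $X:\mathcal B_*(\mathcal H)\to\mathcal B_*(\mathcal H)$, $\|X\|=\sup_{\|\rho\|_1\le1}\|X(\rho)\|_1$; $\mathrm{id}$ is the identity map. *)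

(* Defs.v *)
From HB Require Import structures.
From mathcomp Require Import all_boot all_order all_algebra.
From mathcomp Require Import boolp classical_sets reals.
From mathcomp Require Import complex.
Set Implicit Arguments. Unset Strict Implicit. Unset Printing Implicit Defensive.
Import Order.TTheory GRing.Theory Num.Theory.
Local Open Scope ring_scope.

Section QDefs.
Variable R : realType.
Local Notation C := (R[i]).

Definition adj (m k : nat) (A : 'M[C]_(m, k)) : 'M[C]_(k, m) := (map_mx Num.conj A)^T.

(* positive semidefinite: <v, A v> >= 0 for all v (complex order: real and >= 0) *)
Definition psd (n : nat) (A : 'M[C]_n) : Prop :=
  forall v : 'cV[C]_n, 0 <= (adj v *m A *m v) 0 0.

(* trace norm ||A||_1 = tr sqrt(A^* A), where sqrt(A^* A) is the (unique)
   positive semidefinite square root of A^* A *)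
Definition trnorm (n : nat) (A : 'M[C]_n) : R :=
  xget 0 [set t : R | exists B : 'M[C]_n,
     psd B /\ B *m B = adj A *m A /\ \tr B = (t%:C)%C].

Definition opnorm (n : nat) (X : 'M[C]_n -> 'M[C]_n) : R :=
  sup [set trnorm (X rho) | rho in [set rho : 'M[C]_n | trnorm rho <= 1]].

(* an element of M_m (x) M_n, written as an m x m array of n x n blocks;
   positivity of the corresponding (m n) x (m n) matrix *)
Definition block_psd (m n : nat) (X : 'I_m -> 'I_m -> 'M[C]_n) : Prop :=
  forall v : 'I_m -> 'cV[C]_n,
    0 <= \sum_(i < m) \sum_(j < m) (adj (v i) *m X i j *m v j) 0 0.

Definition completely_positive (n : nat) (T : 'M[C]_n -> 'M[C]_n) : Prop :=
  forall (m : nat) (X : 'I_m -> 'I_m -> 'M[C]_n),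
    block_psd X -> block_psd (fun i j => T (X i j)).

Definition trace_preserving (n : nat) (T : 'M[C]_n -> 'M[C]_n) : Prop :=
  forall rho, \tr (T rho) = \tr rho.

Definition channel (n : nat) (T : {linear 'M[C]_n -> 'M[C]_n}) : Prop :=
  completely_positive T /\ trace_preserving T.

End QDefs.

(* Main.v *)
Require Import Defs.
From HB Require Import structures.
From mathcomp Require Import all_boot all_order all_algebra.
From mathcomp Require Import boolp classical_sets reals.
From mathcomp Require Import complex.
From mathcomp Require Import spectral sesquilinear ring lra.
Set Implicit Arguments. Unset Strict Implicit. Unset Printing Implicit Defensive.
Import Order.TTheory GRing.Theory Num.Theory.
Local Open Scope ring_scope.

Section Gen.
Variable C : numClosedFieldType.

Definition adjC (m k : nat) (A : 'M[C]_(m, k)) : 'M[C]_(k, m) := (map_mx Num.conj A)^T.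
Definition ip n (u v : 'cV[C]_n) : C := (adjC u *m v) 0 0.

Lemma adjE m k (A : 'M[C]_(m, k)) i j : adjC A i j = (A j i)^*.
Proof. by rewrite !mxE. Qed.

Lemma adjK m k (A : 'M[C]_(m, k)) : adjC (adjC A) = A.
Proof. by apply/matrixP => i j; rewrite !adjE conjCK. Qed.

Lemma adjM m k p (A : 'M[C]_(m, k)) (B : 'M[C]_(k, p)) :
  adjC (A *m B) = adjC B *m adjC A.
Proof.
apply/matrixP => i j; rewrite adjE !mxE rmorph_sum; apply: eq_bigr => l _.
by rewrite !mxE rmorphM mulrC.
Qed.

Lemma adjD m k (A B : 'M[C]_(m, k)) : adjC (A + B) = adjC A + adjC B.
Proof. by apply/matrixP => i j; rewrite !mxE rmorphD. Qed.

Lemma adjN m k (A : 'M[C]_(m, k)) : adjC (- A) = - adjC A.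
Proof. by apply/matrixP => i j; rewrite !mxE rmorphN. Qed.

Lemma adjB m k (A B : 'M[C]_(m, k)) : adjC (A - B) = adjC A - adjC B.
Proof. by rewrite adjD adjN. Qed.

Lemma adjZ m k a (A : 'M[C]_(m, k)) : adjC (a *: A) = a^* *: adjC A.
Proof. by apply/matrixP => i j; rewrite !mxE rmorphM. Qed.

Lemma adj0 m k : adjC (0 : 'M[C]_(m, k)) = 0.
Proof. by apply/matrixP => i j; rewrite !mxE conjC0. Qed.

Lemma adj1 k : adjC (1%:M : 'M[C]_k) = 1%:M.
Proof. apply/matrixP => i j; rewrite adjE !mxE eq_sym; by case: (_ == _); rewrite /= ?conjC1 ?conjC0. Qed.

Lemma adj_tr m k (A : 'M[C]_(m, k)) : adjC A = (A ^t Num.conj)%sesqui.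
Proof. by apply/matrixP => i j; rewrite !mxE. Qed.

Lemma adj_sum m k (I : finType) (F : I -> 'M[C]_(m, k)) :
  adjC (\sum_i F i) = \sum_i adjC (F i).
Proof.
apply/matrixP => i j; rewrite adjE !summxE rmorph_sum; apply: eq_bigr => l _.
by rewrite adjE.
Qed.

Lemma adj_diag k (d : 'rV[C]_k) : adjC (diag_mx d) = diag_mx (map_mx Num.conj d).
Proof.
apply/matrixP => i j; rewrite adjE !mxE rmorphMn eq_sym; by case: eqP => [->|].
Qed.

Lemma tr_adj k (A : 'M[C]_k) : \tr (adjC A) = (\tr A)^*.
Proof. rewrite /mxtrace rmorph_sum; apply: eq_bigr => i _; by rewrite adjE. Qed.

Lemma ipE n (u v : 'cV[C]_n) : ip u v = \sum_i (u i 0)^* * v i 0.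
Proof. by rewrite /ip mxE; apply: eq_bigr => i _; rewrite adjE. Qed.

Lemma ip_dot n (u v : 'cV[C]_n) : ip u v = dotmx (v^T) (u^T).
Proof.
rewrite ipE dotmxE mxE; apply: eq_bigr => i _; rewrite !mxE mulrC.
done.
Qed.

Lemma ip_ge0 n (u : 'cV[C]_n) : 0 <= ip u u.
Proof. by rewrite ip_dot dnorm_ge0. Qed.

Lemma ip_CS n (u v : 'cV[C]_n) : `|ip u v| <= sqrtC (ip u u) * sqrtC (ip v v).
Proof.
rewrite ip_dot mulrC !ip_dot.
by have [+ _] := CauchySchwarz_sqrt (dotmx (n:=n)) (v^T) (u^T).
Qed.


Lemma cD (x y : C) : (x + y)^* = x^* + y^*. Proof. exact: rmorphD. Qed.
Lemma cM (x y : C) : (x * y)^* = x^* * y^*. Proof. exact: rmorphM. Qed.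
Lemma cN (x : C) : (- x)^* = - x^*. Proof. exact: rmorphN. Qed.
Lemma cB (x y : C) : (x - y)^* = x^* - y^*. Proof. exact: rmorphB. Qed.

Lemma cS (I : finType) (F : I -> C) : (\sum_i F i)^* = \sum_i (F i)^*.
Proof. exact: rmorph_sum. Qed.

Definition qf n (A : 'M[C]_n) (u v : 'cV[C]_n) : C := (adjC u *m A *m v) 0 0.
Definition psdC n (A : 'M[C]_n) : Prop := forall v : 'cV[C]_n, 0 <= qf A v v.
Definition ev n (i : 'I_n) : 'cV[C]_n := delta_mx i 0.

Lemma qf_ev n (A : 'M[C]_n) i j : qf A (ev i) (ev j) = A i j.
Proof.
rewrite /qf /ev mxE (bigD1 j) //= big1 ?addr0.
  rewrite !mxE eqxx mulr1 (bigD1 i) //= big1 ?addr0.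
    by rewrite !mxE !eqxx conjC1 mul1r.
  by move=> k kn; rewrite !mxE (negbTE kn) conjC0 mul0r.
by move=> k kn; rewrite !mxE (negbTE kn) mulr0.
Qed.

Lemma qf_lin n (A : 'M[C]_n) u w c :
  qf A (u + c *: w) (u + c *: w) =
  qf A u u + c * qf A u w + c^* * qf A w u + c^* * c * qf A w w.
Proof.
rewrite /qf adjD adjZ !mulmxDl !mulmxDr -!scalemxAl -!scalemxAr !mxE.
ring.
Qed.

Lemma psd_real n (A : 'M[C]_n) v : psdC A -> (qf A v v)^* = qf A v v.
Proof. by move=> pA; apply/conj_Creal/ger0_real/pA. Qed.

Lemma psd_herm n (A : 'M[C]_n) : psdC A -> adjC A = A.
Proof.
move=> pA; apply/matrixP => i j; rewrite adjE.
have h1 := psd_real (ev i + 1 *: ev j) pA.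
have h2 := psd_real (ev i + 'i *: ev j) pA.
have hi := psd_real (ev i) pA. have hj := psd_real (ev j) pA.
rewrite !qf_lin !qf_ev in h1; rewrite !qf_lin !qf_ev in h2; rewrite qf_ev in hi; rewrite qf_ev in hj.
rewrite !cD !cM conjC1 hi hj in h1; rewrite !cD !cM !conjCK conjCi hi hj in h2.
move/eqP: h1; rewrite -subr_eq0; set L1 := (_ - _); move/eqP => h1.
move/eqP: h2; rewrite -subr_eq0; set L2 := (_ - _); move/eqP => h2.
have ii : 'i * 'i = -1 :> C by rewrite -expr2 sqrCi.
have e : 2 * (A i j - (A j i)^*) = - L1 + 'i * L2
    - ('i * 'i + 1) * ((A j i)^* - (A i j)^* + A j i - A i j).
  by rewrite /L1 /L2; ring.
rewrite h1 h2 ii addNr !mul0r mulr0 !subr0 oppr0 addr0 in e.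
move/eqP: e; rewrite mulf_eq0 pnatr_eq0 /= subr_eq0 => /eqP ->.
done.
Qed.


Lemma qf_conj n (P M : 'M[C]_n) v :
  qf (adjC P *m M *m P) v v = qf M (P *m v) (P *m v).
Proof. by rewrite /qf adjM !mulmxA. Qed.

Lemma qf_diag n (e : 'rV[C]_n) w :
  qf (diag_mx e) w w = \sum_k e 0 k * ((w k 0)^* * w k 0).
Proof.
rewrite /qf mul_mx_diag mxE; apply: eq_bigr => k _.
rewrite !mxE; ring.
Qed.

Lemma psd_diag n (e : 'rV[C]_n) : (forall k, 0 <= e 0 k) -> psdC (diag_mx e).
Proof.
move=> he v; rewrite qf_diag; apply: sumr_ge0 => k _.
by apply: mulr_ge0 => //; rewrite mulrC mul_conjC_ge0.
Qed.

Lemma psd_conj n (P M : 'M[C]_n) : psdC M -> psdC (adjC P *m M *m P).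
Proof. by move=> hM v; rewrite qf_conj. Qed.

Lemma psd_AA m n (X : 'M[C]_(m, n)) : psdC (adjC X *m X).
Proof.
move=> v; rewrite /qf !mulmxA -(mulmxA (adjC v *m adjC X)) -adjM -/(ip _ _).
exact: ip_ge0.
Qed.

Lemma psd_spec n (A : 'M[C]_n) : psdC A ->
  exists (P : 'M[C]_n) (d : 'rV[C]_n),
  [/\ P *m adjC P = 1%:M, adjC P *m P = 1%:M, forall k, 0 <= d 0 k &
      A = adjC P *m diag_mx d *m P].
Proof.
move=> pA; have hA := psd_herm pA.
have nA : A \is normalmx by apply/normalmxP; rewrite -adj_tr hA.
move/orthomx_spectralP: nA.
set P := spectralmx A; set d := spectral_diag A => eA.
have uP : P \is unitarymx := spectral_unitarymx A.
have e1 : P *m adjC P = 1%:M by rewrite adj_tr; apply/unitarymxP.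
have iP : invmx P = adjC P by rewrite invmx_unitary // adj_tr.
have e2 : adjC P *m P = 1%:M by rewrite -iP mulVmx // spectral_unit.
rewrite iP in eA.
exists P, d; split => // k.
have := pA (adjC P *m ev k).
have -> : qf A (adjC P *m ev k) (adjC P *m ev k) = qf (diag_mx d) (ev k) (ev k).
  rewrite /qf eA adjM adjK !mulmxA.
  by rewrite -(mulmxA _ P (adjC P)) e1 mulmx1 -(mulmxA _ P (adjC P)) e1 mulmx1.
by rewrite qf_ev mxE eqxx mulr1n.
Qed.

Lemma psd_sqrt n (A : 'M[C]_n) : psdC A -> exists B, psdC B /\ B *m B = A.
Proof.
move=> /psd_spec [P [d [e1 e2 dge eA]]].
pose d' := map_mx sqrtC d.
exists (adjC P *m diag_mx d' *m P); split.
  apply: psd_conj; apply: psd_diag => k; by rewrite mxE sqrtC_ge0.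
rewrite eA !mulmxA -(mulmxA _ P (adjC P)) e1 mulmx1 -!mulmxA.
congr (_ *m _); rewrite mulmxA; congr (_ *m _).
apply/matrixP => i j; rewrite mul_diag_mx !mxE.
have [->|nij] := eqVneq i j; last by rewrite !mulr0n mulr0.
by rewrite !mulr1n -expr2 sqrtCK.
Qed.


Lemma adjZZ0 m n (Z : 'M[C]_(m, n)) : adjC Z *m Z = 0 -> Z = 0.
Proof.
move=> h; apply/matrixP => i k.
have /matrixP /(_ k k) := h; rewrite !mxE => hs.
have hz : \sum_j (Z j k)^* * Z j k = 0.
  rewrite -[RHS]hs; apply: eq_bigr => j _; by rewrite !mxE.
have ge : forall j, predT j -> 0 <= (Z j k)^* * Z j k.
  move=> j _ /=; by rewrite mulrC mul_conjC_ge0.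
have := @psumr_eq0P C _ predT (fun j => (Z j k)^* * Z j k) ge hz i isT.
move=> /= /eqP; rewrite mulrC mul_conjC_eq0 => /eqP ->; by rewrite ?mxE.
Qed.


Lemma svd n (X B : 'M[C]_n) : psdC B -> B *m B = adjC X *m X ->
  exists (P G : 'M[C]_n) (d e : 'rV[C]_n),
  [/\ P *m adjC P = 1%:M, adjC P *m P = 1%:M, forall k, 0 <= d 0 k &
      forall k, e 0 k = 0 \/ e 0 k = 1] /\
  [/\ (forall k, e 0 k * d 0 k = d 0 k),
      X = G *m diag_mx d *m P,
      adjC G *m G = diag_mx e & \tr B = \sum_k d 0 k].
Proof.
move=> pB hBX.
have [P [d [e1 e2 dge eB]]] := psd_spec pB.
have c1 : forall m (Z : 'M[C]_(m, n)), Z *m P *m adjC P = Z.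
  by move=> m Z; rewrite -mulmxA e1 mulmx1.
have c2 : forall m (Z : 'M[C]_(m, n)), Z *m adjC P *m P = Z.
  by move=> m Z; rewrite -mulmxA e2 mulmx1.
set Y := X *m adjC P.
have YY : adjC Y *m Y = diag_mx d *m diag_mx d.
  rewrite /Y adjM adjK mulmxA -(mulmxA P) -hBX eB.
  by rewrite !mulmxA e1 mul1mx !c1.
pose g := map_mx (fun x => x^-1) d.
pose G := Y *m diag_mx g.
pose e := \row_k ((d 0 k)^-1 * d 0 k).
have dr : forall k, (d 0 k)^* = d 0 k by move=> k; apply/conj_Creal/ger0_real.
have dir : forall k, ((d 0 k)^-1)^* = (d 0 k)^-1.
  by move=> k; apply/conj_Creal/ger0_real; rewrite invr_ge0.
exists P, G, d, e.
split; last split.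
  split => //.
  move=> k; rewrite mxE; have [->|h] := eqVneq (d 0 k) 0.
    by left; rewrite mulr0.
  by right; rewrite mulVf.
- move=> k; rewrite mxE; have [->|h] := eqVneq (d 0 k) 0.
    by rewrite !mulr0.
  by rewrite mulVf // mul1r.
- have Z0 : Y *m diag_mx (\row_k (1 - e 0 k)) = 0.
    apply: adjZZ0; rewrite adjM adj_diag -mulmxA (mulmxA (adjC Y)) YY !mulmx_diag.
    apply/matrixP => i j; rewrite !mxE.
    case: (i == j); rewrite ?mulr1n ?mulr0n //.
    have [->|h] := eqVneq (d 0 i) 0; first by ring.
    rewrite mulVf // subrr conjC0; ring.
  have YE : Y = Y *m diag_mx e.
    have -> : diag_mx e = 1%:M - diag_mx (\row_k (1 - e 0 k)).
      apply/matrixP => i j; rewrite !mxE.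
      by case: (i == j); rewrite ?mulr1n ?mulr0n ?subr0 // opprB addrC subrK.
    by rewrite mulmxBr Z0 subr0 mulmx1.
  rewrite -[LHS](c2 _ X) -/Y YE; congr (_ *m _).
  rewrite /G -mulmxA mulmx_diag; congr (_ *m _); congr diag_mx.
  by apply/rowP => k; rewrite !mxE.
- rewrite /G adjM adj_diag -mulmxA (mulmxA (adjC Y)) YY !mulmx_diag.
  congr diag_mx; apply/rowP => k; rewrite !mxE dir.
  have [->|h] := eqVneq (d 0 k) 0; first by rewrite invr0; ring.
  by rewrite mulVf //; field.
- by rewrite eB mxtrace_mulC mulmxA e1 mul1mx mxtrace_diag.
Qed.


Lemma qfDl n (A : 'M[C]_n) u w v : qf A (u + w) v = qf A u v + qf A w v.
Proof. by rewrite /qf adjD !mulmxDl mxE. Qed.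
Lemma qfDr n (A : 'M[C]_n) u w v : qf A v (u + w) = qf A v u + qf A v w.
Proof. by rewrite /qf mulmxDr mxE. Qed.
Lemma qfNl n (A : 'M[C]_n) u v : qf A (- u) v = - qf A u v.
Proof. by rewrite /qf adjN !mulNmx mxE. Qed.
Lemma qfNr n (A : 'M[C]_n) u v : qf A u (- v) = - qf A u v.
Proof. by rewrite /qf mulmxN mxE. Qed.
Lemma qfBl n (A : 'M[C]_n) u w v : qf A (u - w) v = qf A u v - qf A w v.
Proof. by rewrite qfDl qfNl. Qed.
Lemma qfBr n (A : 'M[C]_n) u w v : qf A v (u - w) = qf A v u - qf A v w.
Proof. by rewrite qfDr qfNr. Qed.
Lemma qfZl n (A : 'M[C]_n) a u v : qf A (a *: u) v = a^* * qf A u v.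
Proof. by rewrite /qf adjZ -!scalemxAl mxE. Qed.
Lemma qfZr n (A : 'M[C]_n) a u v : qf A u (a *: v) = a * qf A u v.
Proof. by rewrite /qf -scalemxAr mxE. Qed.
Lemma ip_qf n (u v : 'cV[C]_n) : ip u v = qf 1%:M u v.
Proof. by rewrite /qf /ip mulmx1. Qed.
Lemma ip_conj n (u v : 'cV[C]_n) : (ip u v)^* = ip v u.
Proof.
rewrite !ipE cS; apply: eq_bigr => i _; by rewrite cM conjCK mulrC.
Qed.
Lemma ip_real n (u : 'cV[C]_n) : (ip u u)^* = ip u u.
Proof. by apply/conj_Creal/ger0_real/ip_ge0. Qed.

Definition contr n (W : 'M[C]_n) :=
  forall v, ip (adjC W *m v) (adjC W *m v) <= ip v v.

Lemma contr_bound n (W : 'M[C]_n) a b : contr W ->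
  `|qf W a b| <= sqrtC (ip a a) * sqrtC (ip b b).
Proof.
move=> hW.
have -> : qf W a b = ip (adjC W *m a) b by rewrite /qf /ip adjM adjK.
apply: le_trans (ip_CS _ _) _.
apply: ler_wpM2r; first by rewrite sqrtC_ge0 ip_ge0.
by rewrite ler_sqrtC ?nnegrE ?ip_ge0 //.
Qed.

Lemma sqrtC_real_ge0 (x : C) : 0 <= x -> (sqrtC x)^* = sqrtC x.
Proof. by move=> h; apply/conj_Creal/ger0_real; rewrite sqrtC_ge0. Qed.

Lemma jensen (I : finType) (p x : I -> C) :
  (forall k, 0 <= p k) -> (forall k, 0 <= x k) -> \sum_k p k = 1 ->
  \sum_k p k * sqrtC (x k) <= sqrtC (\sum_k p k * x k).
Proof.
move=> pge xge ps.
set m := \sum_k p k * sqrtC (x k).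
have mge : 0 <= m by apply: sumr_ge0 => k _; rewrite mulr_ge0 ?sqrtC_ge0.
have key : 0 <= \sum_k p k * x k - m ^+ 2.
  have -> : \sum_k p k * x k - m ^+ 2 =
      \sum_k p k * ((sqrtC (x k) - m) ^+ 2).
    transitivity (\sum_k (p k * x k + (- 2 * m) * (p k * sqrtC (x k)) + m ^+ 2 * p k)).
      rewrite !big_split /= -!mulr_sumr ps -/m; ring.
    apply: eq_bigr => k _; rewrite -{1}(sqrtCK (x k)); ring.
  apply: sumr_ge0 => k _; apply: mulr_ge0 => //.
  rewrite -realEsqr; apply: rpredB; apply: ger0_real; by rewrite ?sqrtC_ge0.
rewrite -(sqrCK mge) ler_sqrtC ?nnegrE ?exprn_ge0 //.
  by rewrite -subr_ge0.
by apply: sumr_ge0 => k _; rewrite mulr_ge0.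
Qed.


Lemma ipDl n (u w v : 'cV[C]_n) : ip (u + w) v = ip u v + ip w v.
Proof. by rewrite !ip_qf qfDl. Qed.
Lemma ipDr n (u w v : 'cV[C]_n) : ip v (u + w) = ip v u + ip v w.
Proof. by rewrite !ip_qf qfDr. Qed.
Lemma ipBl n (u w v : 'cV[C]_n) : ip (u - w) v = ip u v - ip w v.
Proof. by rewrite !ip_qf qfBl. Qed.
Lemma ipBr n (u w v : 'cV[C]_n) : ip v (u - w) = ip v u - ip v w.
Proof. by rewrite !ip_qf qfBr. Qed.
Lemma ipNl n (u v : 'cV[C]_n) : ip (- u) v = - ip u v.
Proof. by rewrite !ip_qf qfNl. Qed.
Lemma ipNr n (u v : 'cV[C]_n) : ip u (- v) = - ip u v.
Proof. by rewrite !ip_qf qfNr. Qed.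
Lemma ipZl n a (u v : 'cV[C]_n) : ip (a *: u) v = a^* * ip u v.
Proof. by rewrite !ip_qf qfZl. Qed.
Lemma ipZr n a (u v : 'cV[C]_n) : ip u (a *: v) = a * ip u v.
Proof. by rewrite !ip_qf qfZr. Qed.

Lemma pure_pure n (W : 'M[C]_n) phi psi : contr W -> ip phi phi = 1 -> ip psi psi = 1 ->
  `|qf W phi phi - qf W psi psi| <= 2 * sqrtC (1 - `|ip psi phi| ^+ 2).
Proof.
move=> hW h1 h2.
set c := ip psi phi.
pose w : C := if c == 0 then 1 else `|c| / c.
have ww : w^* * w = 1.
  rewrite /w; case: eqP => [_|/eqP cn]; first by rewrite conjC1 mulr1.
  have cn' : c^* != 0 by rewrite conjC_eq0.
  rewrite cM fmorphV /= (conj_Creal (normr_real c)).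
  transitivity (`|c| ^+ 2 / (c * c^*)); first by field; apply/andP; split.
  by rewrite normCK divff // mulf_neq0.
have wc : w * c = `|c|.
  rewrite /w; case: eqP => [->|/eqP cn]; first by rewrite normr0 mulr0.
  by rewrite mulrAC mulfK.
set phi' := w *: phi.
have e1 : qf W phi' phi' = qf W phi phi by rewrite qfZl qfZr mulrA ww mul1r.
have e2 : ip psi phi' = `|c| by rewrite ipZr wc.
have e3 : ip phi' psi = `|c| by rewrite -ip_conj e2 (conj_Creal (normr_real c)).
have e4 : ip phi' phi' = 1 by rewrite ipZl ipZr mulrA ww mul1r h1.
have id2 : 2 * (qf W phi' phi' - qf W psi psi) =
    qf W (phi' - psi) (phi' + psi) + qf W (phi' + psi) (phi' - psi).
  rewrite !qfBl !qfDl !qfBr !qfDr; ring.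
have nm : ip (phi' - psi) (phi' - psi) = 2 - 2 * `|c|.
  by rewrite !ipBl !ipBr e2 e3 e4 h2; ring.
have np : ip (phi' + psi) (phi' + psi) = 2 + 2 * `|c|.
  by rewrite !ipDl !ipDr e2 e3 e4 h2; ring.
have nmge : 0 <= 2 - 2 * `|c| by rewrite -nm ip_ge0.
have npge : 0 <= 2 + 2 * `|c| by rewrite -np ip_ge0.
rewrite -e1.
have h2pos : (0 : C) < 2 by [].
rewrite -(ler_pM2l h2pos) -normr_nat -normrM id2.
apply: le_trans (ler_normD _ _) _.
apply: le_trans (lerD (contr_bound _ _ hW) (contr_bound _ _ hW)) _.
have cle : 0 <= 1 - `|c| ^+ 2.
  have -> : 1 - `|c| ^+ 2 = (2 - 2 * `|c|) * (2 + 2 * `|c|) / 4.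
    by field.
  by rewrite divr_ge0 ?mulr_ge0.
have sq : sqrtC (2 - 2 * `|c|) * sqrtC (2 + 2 * `|c|) = 2 * sqrtC (1 - `|c| ^+ 2).
  rewrite -sqrtCM ?nnegrE //.
  have -> : (2 - 2 * `|c|) * (2 + 2 * `|c|) = 2 ^+ 2 * (1 - `|c| ^+ 2) by ring.
  by rewrite sqrtCM ?nnegrE ?exprn_ge0 // sqrCK.
rewrite nm np [sqrtC (2 + 2 * _) * _]mulrC sq normr_nat.
have -> : 2 * sqrtC (1 - `|c| ^+ 2) + 2 * sqrtC (1 - `|c| ^+ 2)
   = 2 * (2 * sqrtC (1 - `|c| ^+ 2)) by ring.
by [].
Qed.


Lemma mx_diag_sum m k p (A : 'M[C]_(m, k)) (d : 'rV[C]_k) (B : 'M[C]_(k, p)) :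
  A *m diag_mx d *m B = \sum_l d 0 l *: (col l A *m row l B).
Proof.
apply/matrixP => i j; rewrite mul_mx_diag !mxE summxE; apply: eq_bigr => l _.
by rewrite !mxE big_ord1 !mxE; ring.
Qed.

Lemma tr_sum n (I : finType) (F : I -> 'M[C]_n) : \tr (\sum_k F k) = \sum_k \tr (F k).
Proof.
rewrite /mxtrace; under eq_bigr do rewrite summxE; exact: exchange_big.
Qed.

Lemma tr_rank1 n (W : 'M[C]_n) (phi : 'cV[C]_n) : \tr (W *m (phi *m adjC phi)) = qf W phi phi.
Proof. by rewrite mulmxA mxtrace_mulC mulmxA trace_mx11. Qed.

Lemma qf_rank1 n (phi psi : 'cV[C]_n) : qf (phi *m adjC phi) psi psi = `|ip psi phi| ^+ 2.
Proof.
rewrite normCK ip_conj /qf /ip mulmxA -(mulmxA (adjC psi *m phi)) [in LHS]mxE big_ord1.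
done.
Qed.

Lemma qf_sum n (I : finType) (a : I -> C) (M : I -> 'M[C]_n) u v :
  qf (\sum_k a k *: M k) u v = \sum_k a k * qf (M k) u v.
Proof.
rewrite /qf mulmx_sumr mulmx_suml summxE; apply: eq_bigr => k _.
by rewrite -scalemxAr -scalemxAl mxE.
Qed.

Lemma mixed n (W sigma : 'M[C]_n) psi : contr W -> psdC sigma -> \tr sigma = 1 ->
  ip psi psi = 1 ->
  `|\tr (W *m sigma) - qf W psi psi| <= 2 * sqrtC (1 - qf sigma psi psi).
Proof.
move=> hW ps ht hpsi.
have [R [p [e1 e2 pge eS]]] := psd_spec ps.
pose phi k := col k (adjC R).
have rowE : forall k, row k R = adjC (phi k).
  by move=> k; apply/matrixP => i j; rewrite !mxE conjCK.
have eS' : sigma = \sum_k p 0 k *: (phi k *m adjC (phi k)).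
  by rewrite eS mx_diag_sum; apply: eq_bigr => k _; rewrite rowE.
have hphi : forall k, ip (phi k) (phi k) = 1.
  move=> k; rewrite ipE; have /matrixP/(_ k k) := e1; rewrite !mxE eqxx /= ?mulr1n => <-.
  by apply: eq_bigr => i _; rewrite !mxE conjCK mulrC.
have psum : \sum_k p 0 k = 1.
  by rewrite -ht eS mxtrace_mulC mulmxA e1 mul1mx mxtrace_diag.
have trW : \tr (W *m sigma) = \sum_k p 0 k * qf W (phi k) (phi k).
  rewrite eS' mulmx_sumr tr_sum; apply: eq_bigr => k _.
  by rewrite -scalemxAr mxtraceZ tr_rank1.
have qfS : qf sigma psi psi = \sum_k p 0 k * `|ip psi (phi k)| ^+ 2.
  by rewrite eS' qf_sum; apply: eq_bigr => k _; rewrite qf_rank1.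
have cle : forall k, 0 <= 1 - `|ip psi (phi k)| ^+ 2.
  move=> k; rewrite subr_ge0; apply: exprn_ile1 => //.
  by apply: le_trans (ip_CS _ _) _; rewrite hpsi hphi sqrtC1 mulr1.
have -> : \tr (W *m sigma) - qf W psi psi =
    \sum_k p 0 k * (qf W (phi k) (phi k) - qf W psi psi).
  rewrite trW -[X in _ - X]mul1r -psum mulr_suml -sumrB.
  by apply: eq_bigr => k _; rewrite mulrBr.
apply: le_trans (ler_norm_sum _ _ _) _.
apply: (@le_trans _ _ (\sum_k p 0 k * (2 * sqrtC (1 - `|ip psi (phi k)| ^+ 2)))).
  apply: ler_sum => k _; rewrite normrM ger0_norm //.
  by apply: ler_wpM2l => //; apply: pure_pure.
under eq_bigr do rewrite mulrCA.
rewrite -mulr_sumr; apply: ler_wpM2l => //.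
apply: le_trans (jensen (fun k => pge k) cle psum) _.
rewrite le_eqVlt; apply/orP; left; apply/eqP; congr sqrtC.
rewrite qfS -[X in X - _]psum -sumrB; apply: eq_bigr => k _; ring.
Qed.


Lemma fid_le1 n (sigma : 'M[C]_n) psi : psdC sigma -> \tr sigma = 1 ->
  ip psi psi = 1 -> 0 <= 1 - qf sigma psi psi.
Proof.
move=> ps ht hpsi.
have [R [p [e1 e2 pge eS]]] := psd_spec ps.
pose phi k := col k (adjC R).
have rowE : forall k, row k R = adjC (phi k).
  by move=> k; apply/matrixP => i j; rewrite !mxE conjCK.
have eS' : sigma = \sum_k p 0 k *: (phi k *m adjC (phi k)).
  by rewrite eS mx_diag_sum; apply: eq_bigr => k _; rewrite rowE.
have hphi : forall k, ip (phi k) (phi k) = 1.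
  move=> k; rewrite ipE; have /matrixP/(_ k k) := e1; rewrite !mxE eqxx /= ?mulr1n => <-.
  by apply: eq_bigr => i _; rewrite !mxE conjCK mulrC.
have psum : \sum_k p 0 k = 1.
  by rewrite -ht eS mxtrace_mulC mulmxA e1 mul1mx mxtrace_diag.
have qfS : qf sigma psi psi = \sum_k p 0 k * `|ip psi (phi k)| ^+ 2.
  by rewrite eS' qf_sum; apply: eq_bigr => k _; rewrite qf_rank1.
have cle : forall k, 0 <= 1 - `|ip psi (phi k)| ^+ 2.
  move=> k; rewrite subr_ge0; apply: exprn_ile1 => //.
  by apply: le_trans (ip_CS _ _) _; rewrite hpsi hphi sqrtC1 mulr1.
rewrite qfS -[X in X - _]psum -sumrB.
apply: sumr_ge0 => k _; rewrite -[X in X - _]mulr1 -mulrBr; exact: mulr_ge0.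
Qed.

Lemma ip_eq0 n (h : 'cV[C]_n) : ip h h = 0 -> h = 0.
Proof.
move=> h0; apply: adjZZ0; apply/matrixP => i j.
by rewrite !ord1 [RHS]mxE; exact: h0.
Qed.

Section GenBound.
Variable n : nat.
Variable Phi : 'M[C]_n -> C.
Hypothesis PhiD : forall M N, Phi (M + N) = Phi M + Phi N.
Hypothesis PhiZ : forall a M, Phi (a *: M) = a * Phi M.
Variable b : C.
Hypothesis bge : 0 <= b.
Hypothesis pure : forall psi, ip psi psi = 1 -> `|Phi (psi *m adjC psi)| <= b.

Lemma Phi0 : Phi 0 = 0.
Proof. by rewrite -(scale0r 0) PhiZ mul0r. Qed.

Lemma PhiN M : Phi (- M) = - Phi M.
Proof. by rewrite -scaleN1r PhiZ mulN1r. Qed.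

Lemma Phi_sum (I : finType) (F : I -> 'M[C]_n) : Phi (\sum_k F k) = \sum_k Phi (F k).
Proof. exact: (big_morph Phi PhiD Phi0). Qed.

Lemma scale_bound h : `|Phi (h *m adjC h)| <= b * ip h h.
Proof.
have [->|hn] := eqVneq h 0.
  by rewrite mul0mx Phi0 normr0 /ip mulmx0 mxE mulr0.
have ipn : ip h h != 0 by apply: contra hn => /eqP /ip_eq0 ->.
have ipge := ip_ge0 h.
set a := sqrtC (ip h h).
have an : a != 0 by rewrite sqrtC_eq0.
have ar : a^* = a by apply: sqrtC_real_ge0.
have air : (a^-1)^* = a^-1 by rewrite fmorphV /= ar.
set psi := a^-1 *: h.
have hE : h = a *: psi by rewrite /psi scalerA mulfV // scale1r.
have ipsi : ip psi psi = 1.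
  rewrite /psi ipZl ipZr air mulrA -[ip h h](sqrtCK) -/a; by field.
have -> : h *m adjC h = ip h h *: (psi *m adjC psi).
  rewrite {1 2}hE adjZ -scalemxAl -scalemxAr scalerA ar.
  by rewrite -[ip h h](sqrtCK) -/a expr2.
rewrite PhiZ normrM ger0_norm // mulrC.
by apply: ler_wpM2r => //; apply: pure.
Qed.

Lemma polar_bound g q : `|Phi (g *m adjC q)| <= b * (ip g g + ip q q).
Proof.
have ii : 'i * 'i = -1 :> C by rewrite -expr2 sqrCi.
pose h1 := g + q. pose h2 := g - q. pose h3 := g + 'i *: q. pose h4 := g - 'i *: q.
have id4 : 4 *: (g *m adjC q) = h1 *m adjC h1 - h2 *m adjC h2
    + 'i *: (h3 *m adjC h3) - 'i *: (h4 *m adjC h4).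
  apply/matrixP => i j; rewrite !mxE !big_ord1 !mxE.
  rewrite !cD ?cN !cM !conjCi.
  set x := g i 0; set y := q i 0; set x' := (g j 0)^*; set y' := (q j 0)^*.
  have idt : forall (t u v u' v' : C), t * t = -1 ->
    4 * (u * v') = (u + v) * (u' + v') - (u - v) * (u' - v')
    + t * ((u + t * v) * (u' + - t * v')) - t * ((u - t * v) * (u' - - t * v')).
    move=> t u v u' v' tt.
    transitivity ((u + v) * (u' + v') - (u - v) * (u' - v')
    + t * ((u + t * v) * (u' + - t * v')) - t * ((u - t * v) * (u' - - t * v'))
      - (t * t + 1) * (2 * v * u' - 2 * u * v')); first ring.
    by rewrite tt addNr mul0r subr0.
  exact: idt.

have isum : ip h1 h1 + ip h2 h2 + ip h3 h3 + ip h4 h4 = 4 * (ip g g + ip q q).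
  rewrite /h1 /h2 /h3 /h4 !ipDl !ipDr !ipNl !ipNr !ipZl !ipZr conjCi.
  transitivity (4 * (ip g g + ip q q) - 2 * ('i * 'i + 1) * ip q q); first ring.
  by rewrite ii addNr mulr0 mul0r subr0.
have h4pos : (0 : C) < 4 by [].
rewrite -(ler_pM2l h4pos) -[4 in X in X <= _]normr_nat -normrM -PhiZ id4.
rewrite !PhiD !PhiN !PhiZ mulrCA -isum !mulrDr.
set a1 := Phi (h1 *m adjC h1); set a2 := Phi (h2 *m adjC h2).
set a3 := Phi (h3 *m adjC h3); set a4 := Phi (h4 *m adjC h4).
apply: (@le_trans _ _ (`|a1| + `|a2| + `|a3| + `|a4|)).
  apply: le_trans (ler_normB _ _) _; rewrite normrM normCi mul1r lerD2r.
  apply: le_trans (ler_normD _ _) _; rewrite normrM normCi mul1r lerD2r.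
  exact: ler_normB.
by rewrite !lerD ?scale_bound.
Qed.

Lemma gen_main rho B0 : psdC B0 -> B0 *m B0 = adjC rho *m rho ->
  `|Phi rho| <= 2 * b * \tr B0.
Proof.
move=> pB hB.
have [P [G [d [e [[e1 e2 dge e01] [ed rhoE GG trB]]]]]] := svd pB hB.
rewrite trB rhoE mx_diag_sum Phi_sum.
apply: le_trans (ler_norm_sum _ _ _) _.
rewrite mulr_sumr; apply: ler_sum => k _.
rewrite PhiZ normrM ger0_norm // [2 * b * _]mulrC; apply: ler_wpM2l => //.
rewrite -[row k P]adjK.
apply: le_trans (polar_bound _ _) _.
have -> : ip (col k G) (col k G) = e 0 k.
  have /matrixP/(_ k k) := GG; rewrite !mxE eqxx mulr1n => <-.
  by rewrite ipE; apply: eq_bigr => i _; rewrite !mxE.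
have -> : ip (adjC (row k P)) (adjC (row k P)) = 1.
  have /matrixP/(_ k k) := e1; rewrite !mxE eqxx /= ?mulr1n => <-.
  by rewrite ipE; apply: eq_bigr => i _; rewrite !mxE conjCK mulrC.
rewrite mulrC; apply: ler_wpM2r => //.
by case: (e01 k) => ->; rewrite ?add0r ?ler1n.
Qed.

End GenBound.

Lemma polarW n (X B : 'M[C]_n) : psdC B -> B *m B = adjC X *m X ->
  exists W, contr W /\ \tr (W *m X) = \tr B.
Proof.
move=> pB hB.
have [P [G [d [e [[e1 e2 dge e01] [ed XE GG trB]]]]]] := svd pB hB.
exists (adjC P *m adjC G); split.
  move=> v; rewrite adjM !adjK.
  rewrite /ip adjM adjM !mulmxA -(mulmxA _ (adjC G) G) GG -/(qf _ _ _).
  rewrite -mulmxA -(adjM P v) -/(qf (diag_mx e) (P *m v) (P *m v)) qf_diag.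
  have -> : (adjC v *m v) 0 0 = ip (P *m v) (P *m v).
    by rewrite /ip adjM -(mulmxA (adjC v)) (mulmxA (adjC P)) e2 mul1mx.
  rewrite ipE; apply: ler_sum => k _.
  case: (e01 k) => ->; rewrite ?mul0r ?mul1r //.
  by rewrite mulrC mul_conjC_ge0.
rewrite trB XE !mulmxA -(mulmxA _ (adjC G) G) GG.
rewrite mxtrace_mulC !mulmxA e1 mul1mx mulmx_diag mxtrace_diag.
by apply: eq_bigr => k _; rewrite mxE.
Qed.

End Gen.

Section Final.
Variable R : realType.
Local Notation C := (R[i]).

Lemma sqrtC_R (x : R) : 0 <= x -> sqrtC (x%:C)%C = ((Num.sqrt x)%:C)%C.
Proof.
move=> hx.
have e : ((Num.sqrt x)%:C)%C ^+ 2 = (x%:C)%C :> C by rewrite -rmorphXn /= sqr_sqrtr.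
by rewrite -e sqrCK // ler0c sqrtr_ge0.
Qed.

Lemma ge0_realC (z : C) : 0 <= z -> z = ((complex.Re z)%:C)%C.
Proof.
case: z => a b; rewrite lecE /= => /andP [/eqP hb _]; rewrite hb.
done.
Qed.

Lemma trnorm_spec n (A : 'M[C]_n) :
  exists B : 'M[C]_n, psdC B /\ B *m B = adjC A *m A /\ \tr B = ((trnorm A)%:C)%C.
Proof.
have [B [pB hB]] := psd_sqrt (psd_AA A).
have ex : exists t : R, exists B : 'M[C]_n, psd B /\ B *m B = adj A *m A /\ \tr B = (t%:C)%C.
  exists (complex.Re (\tr B)), B; split => //; split => //.
  apply: ge0_realC; rewrite /mxtrace; apply: sumr_ge0 => i _.
  by have := pB (@ev C n i); rewrite qf_ev.
exact: (xgetPex 0 ex).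
Qed.

Lemma psd_rank1 n (psi : 'cV[C]_n) : psdC (psi *m adjC psi).
Proof. by move=> v; rewrite qf_rank1 exprn_ge0. Qed.

Lemma cp_psd n (T : 'M[C]_n -> 'M[C]_n) M :
  completely_positive T -> psdC M -> psdC (T M).
Proof.
move=> cp pM v.
have hb : block_psd (fun (_ _ : 'I_1) => M).
  by move=> w; rewrite !big_ord1; apply: pM.
have := cp 1%N _ hb (fun _ => v).
by rewrite !big_ord1.
Qed.

End Final.

Theorem lemma2 (R : realType) (n : nat) (T : {linear 'M[R[i]]_n -> 'M[R[i]]_n}) :
  channel T ->
  opnorm (fun rho => T rho - rho) <=
  4 * sup [set Num.sqrt (1 - complex.Re ((adj psi *m T (psi *m adj psi) *m psi) 0 0))
          | psi in [set psi : 'cV[R[i]]_n | (adj psi *m psi) 0 0 = 1]].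
Proof.
move=> [cp tp].
set S := (X in sup X).
set s := sup S.
have Fge : forall psi : 'cV[R[i]]_n,
    0 <= (adj psi *m T (psi *m adj psi) *m psi) 0 0.
  move=> psi; exact: (cp_psd cp (psd_rank1 psi)).
have Sle1 : forall x, S x -> x <= 1.
  move=> x [psi _ <-]; rewrite -[X in _ <= X]sqrtr1 ler_sqrt // lerBlDr lerDl.
  by have := Fge psi; rewrite lecE => /andP [_].
have Sub : forall x, S x -> x <= s.
  move=> x Sx; apply: sup_upper_bound => //; split; first by exists x.
  by exists 1 => y /Sle1.
have s0 : 0 <= s.
  have [[x Sx]|ne] := pselect (S !=set0)%classic.
    apply: le_trans (Sub _ Sx); case: Sx => psi _ <-; exact: sqrtr_ge0.
  rewrite /s; have -> : S = set0 by apply/eqP; apply: contra_notT ne => /set0P.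
  by rewrite sup0.
rewrite /opnorm.
set E := (X in sup X).
have [[y Ey]|ne] := pselect (E !=set0)%classic; last first.
  have -> : E = set0 by apply/eqP; apply: contra_notT ne => /set0P.
  by rewrite sup0 mulr_ge0.
apply: ge_sup; first by exists y.
move=> _ [rho hrho <-].
have [B0 [pB0 [hB0 tB0]]] := trnorm_spec rho.
set X := T rho - rho.
have [B [pB [hB tB]]] := trnorm_spec X.
have [W [cW trW]] := polarW pB hB.
pose Phi := fun M : 'M[R[i]]_n => \tr (W *m (T M - M)).
have PhiD : forall M N, Phi (M + N) = Phi M + Phi N.
  by move=> M N; rewrite /Phi -mxtraceD -mulmxDr; congr (\tr (_ *m _)); rewrite linearD opprD addrACA.
have PhiZ : forall a M, Phi (a *: M) = a * Phi M.
  by move=> a M; rewrite /Phi linearZ /= -scalerBr -scalemxAr mxtraceZ.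
have b0 : 0 <= 2 * ((s%:C)%C : R[i]) by rewrite mulr_ge0 // ler0c.
have pure : forall psi, ip psi psi = 1 ->
    `|Phi (psi *m adjC psi)| <= 2 * ((s%:C)%C : R[i]).
  move=> psi hpsi.
  rewrite /Phi mulmxBr linearB /= tr_rank1.
  set sigma := T (psi *m adjC psi).
  have ps : psdC sigma := cp_psd cp (psd_rank1 psi).
  have ht : \tr sigma = 1 by rewrite /sigma tp mxtrace_mulC trace_mx11.
  apply: le_trans (mixed cW ps ht hpsi) _.
  apply: ler_wpM2l => //.
  have hF := ge0_realC (Fge psi).
  rewrite /qf /sigma.
  have e1 : (adjC psi *m T (psi *m adjC psi) *m psi) 0 0
      = (adj psi *m T (psi *m adj psi) *m psi) 0 0 by [].
  rewrite e1 hF -(rmorph1 (@real_complex R)) -rmorphB /=.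
  have hx : 0 <= 1 - complex.Re ((adj psi *m T (psi *m adj psi) *m psi) 0 0).
    have := fid_le1 ps ht hpsi; rewrite /qf /sigma e1 hF.
    by rewrite -(rmorph1 (@real_complex R)) -rmorphB /= ler0c.
  rewrite sqrtC_R // lecR; apply: Sub; by exists psi.
have := gen_main PhiD PhiZ b0 pure pB0 hB0.
have -> : Phi rho = \tr B by rewrite /Phi -trW.
rewrite tB tB0 => h.
have trge : 0 <= \tr B.
  rewrite /mxtrace; apply: sumr_ge0 => i _.
  by have := pB (@ev _ n i); rewrite qf_ev.
rewrite tB in trge; rewrite ger0_norm // in h.
have : ((trnorm X)%:C)%C <= (4 * s)%:C%C :> R[i].
  apply: le_trans h _.
  have e4 : ((4 * s)%:C)%C = 2 * (2 * (s%:C)%C) * 1 :> R[i].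
    by rewrite rmorphM /= rmorph_nat mulr1 mulrA -natrM.
  rewrite e4; apply: ler_wpM2l; first by rewrite !mulr_ge0 // ler0c.
  by rewrite -(rmorph1 (@real_complex R)) lecR.
by rewrite lecR.
Qed.
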